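(* Let $\mathbf L=(L,\vee,\wedge,{}',0,1)$ be a member of $\mathcal V$ and $I$ an ideal of $\mathbf L$. Then $\Theta_I:=\{(x,y)\in L^2\mid (x\wedge y)\vee(x\vee y)'\in I\}$ is a congruence on $\mathbf L$ and its kernel $\{x\in L\mid (x,1)\in\Theta_I\}$ equals $I$.
   Context: $\mathcal V$ is the variety of algebras $(L,\vee,\wedge,{}',0,1)$ that are bounded lattices with a complementation $'$ (i.e. $x\vee x'\approx1$, $x\wedge x'\approx0$) satisfying the identities $x\vee y'\approx y'\vee\big((x\vee y')\wedge y\big)$ and $x\wedge y\approx x\wedge\big((x\wedge y)\vee x'\big)$. An ideal term in $y_1,\dots,y_m$ is a term $s(x_1,\dots,x_n,y_1,\dots,y_m)$ such that $\mathcal V$ satisfies $s(x_1,\dots,x_n,1,\dots,1)\approx1$; an ideal of $\mathbf L$ is a subset $I\subseteq L$ such that $s(a_1,\dots,a_n,b_1,\dots,b_m)\in I$ for every ideal term $s$, all $a_i\in L$ and all $b_j\in I$ (in particular $1\in I$). *)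

(* Defs.v *)
From mathcomp Require Import all_boot.
Set Implicit Arguments. Unset Strict Implicit. Unset Printing Implicit Defensive.

Record alg := Alg {
  carrier :> Type;
  ajoin : carrier -> carrier -> carrier;
  ameet : carrier -> carrier -> carrier;
  acompl : carrier -> carrier;
  azero : carrier;
  aone : carrier }.

Definition in_V (A : alg) : Prop :=
  let j := @ajoin A in let m := @ameet A in let c := @acompl A in
  let z := @azero A in let o := @aone A in
  (forall x y z', j x (j y z') = j (j x y) z') /\
  (forall x y z', m x (m y z') = m (m x y) z') /\
  (forall x y, j x y = j y x) /\
  (forall x y, m x y = m y x) /\
  (forall x y, j x (m x y) = x) /\
  (forall x y, m x (j x y) = x) /\
  (forall x, j x z = x) /\
  (forall x, m x o = x) /\
  (forall x, j x (c x) = o) /\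
  (forall x, m x (c x) = z) /\
  (forall x y, j x (c y) = j (c y) (m (j x (c y)) y)) /\
  (forall x y, m x y = m x (j (m x y) (c x))).

Inductive term (n k : nat) : Type :=
| TX : 'I_n -> term n k
| TY : 'I_k -> term n k
| TJoin : term n k -> term n k -> term n k
| TMeet : term n k -> term n k -> term n k
| TCompl : term n k -> term n k
| TZero : term n k
| TOne : term n k.

Fixpoint eval n k (A : alg) (a : 'I_n -> A) (b : 'I_k -> A) (t : term n k) : A :=
  match t with
  | TX i => a i
  | TY j => b j
  | TJoin s u => @ajoin A (eval a b s) (eval a b u)
  | TMeet s u => @ameet A (eval a b s) (eval a b u)
  | TCompl s => @acompl A (eval a b s)
  | TZero => @azero A
  | TOne => @aone A
  end.

Definition ideal_term n k (s : term n k) : Prop :=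
  forall B : alg, in_V B -> forall a : 'I_n -> B,
    eval a (fun _ => @aone B) s = @aone B.

Definition ideal (A : alg) (I : A -> Prop) : Prop :=
  forall n k (s : term n k), ideal_term s ->
  forall (a : 'I_n -> A) (b : 'I_k -> A), (forall j, I (b j)) -> I (eval a b s).

Definition congruence (A : alg) (R : A -> A -> Prop) : Prop :=
  (forall x, R x x) /\ (forall x y, R x y -> R y x) /\
  (forall x y z, R x y -> R y z -> R x z) /\
  (forall x y x' y', R x x' -> R y y' -> R (@ajoin A x y) (@ajoin A x' y')) /\
  (forall x y x' y', R x x' -> R y y' -> R (@ameet A x y) (@ameet A x' y')) /\
  (forall x x', R x x' -> R (@acompl A x) (@acompl A x')).

Definition Theta (A : alg) (I : A -> Prop) (x y : A) : Prop :=
  I (@ajoin A (@ameet A x y) (@acompl A (@ajoin A x y))).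

(* Main.v *)
Require Import Defs.
From mathcomp Require Import all_boot.
Set Implicit Arguments. Unset Strict Implicit. Unset Printing Implicit Defensive.

Fixpoint tsubst n k m k' (fx : 'I_n -> term m k') (fy : 'I_k -> term m k')
  (t : term n k) : term m k' :=
  match t with
  | TX i => fx i
  | TY j => fy j
  | TJoin s u => TJoin (tsubst fx fy s) (tsubst fx fy u)
  | TMeet s u => TMeet (tsubst fx fy s) (tsubst fx fy u)
  | TCompl s => TCompl (tsubst fx fy s)
  | TZero => TZero m k'
  | TOne => TOne m k'
  end.

Lemma eval_subst n k m k' (A : alg) (a : 'I_m -> A) (b : 'I_k' -> A)
  (fx : 'I_n -> term m k') (fy : 'I_k -> term m k') (t : term n k) :
  eval a b (tsubst fx fy t) =
  eval (fun i => eval a b (fx i)) (fun j => eval a b (fy j)) t.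
Proof. by elim: t => //= [s -> u ->|s -> u ->|s ->]. Qed.

Lemma eval_ext n k (A : alg) (a a' : 'I_n -> A) (b b' : 'I_k -> A) (t : term n k) :
  (forall i, a i = a' i) -> (forall j, b j = b' j) -> eval a b t = eval a' b' t.
Proof. by move=> Ha Hb; elim: t => //= [s -> u ->|s -> u ->|s ->]. Qed.

Definition tf (A : alg) (x y : A) : A :=
  ajoin (ameet x y) (acompl (ajoin x y)).


Lemma Vfacts (A : alg) (H : in_V A) :
  (forall x : A, ameet x x = x) /\ (forall x : A, ajoin x x = x) /\
  (forall x : A, ajoin x (aone A) = aone A) /\ acompl (aone A) = azero A.
Proof.
case: H => jA [mA [jC [mC [jabs [mabs [j0 [m1 [jc [mc [iA iB]]]]]]]]]].
have mm : forall x : A, ameet x x = x.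
  by move=> x; have := mabs x (ameet x x); rewrite jabs.
have jj : forall x : A, ajoin x x = x.
  by move=> x; have := jabs x (ajoin x x); rewrite mabs.
split=> //; split=> //; split.
  by move=> x; rewrite -{1}(m1 x) jC mC; apply: jabs.
by have := mc (aone A); rewrite mC m1.
Qed.

Lemma tf_xx (A : alg) (H : in_V A) (x : A) : tf x x = aone A.
Proof.
have [mm [jj _]] := Vfacts H.
case: H => jA [mA [jC [mC [jabs [mabs [j0 [m1 [jc [mc [iA iB]]]]]]]]]].
by rewrite /tf mm jj jc.
Qed.

Lemma tf_x1 (A : alg) (H : in_V A) (x : A) : tf x (aone A) = x.
Proof.
have [mm [jj [j1 c1]]] := Vfacts H.
case: H => jA [mA [jC [mC [jabs [mabs [j0 [m1 [jc [mc [iA iB]]]]]]]]]].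
by rewrite /tf j1 c1 m1 j0.
Qed.

Definition Phi (L : alg) (I : L -> Prop) (x y : L) : Prop :=
  forall n (s : term n 1) (a : 'I_n -> L),
    I (eval a (fun _ => x) s) <-> I (eval a (fun _ => y) s).

Definition ext (L : alg) n (a : 'I_n -> L) (c : L) : 'I_n.+1 -> L :=
  fun i => match unlift ord_max i with Some i' => a i' | None => c end.

Lemma Phi_ctx (L : alg) (I : L -> Prop) (g : L -> L)
  (Hg : forall n (s : term n 1), exists m (s' : term m 1),
        forall (a : 'I_n -> L), exists a' : 'I_m -> L, forall u,
        eval a' (fun _ => u) s' = eval a (fun _ => g u) s) :
  forall x y, Phi I x y -> Phi I (g x) (g y).
Proof.
move=> x y Hxy n s a.
have [m [s' Hs']] := Hg n s; have [a' Ha'] := Hs' a.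
by rewrite -!Ha'; apply: Hxy.
Qed.

Lemma ctx_join (L : alg) (c : L) : forall n (s : term n 1), exists m (s' : term m 1),
        forall (a : 'I_n -> L), exists a' : 'I_m -> L, forall u,
        eval a' (fun _ => u) s' = eval a (fun _ => ajoin u c) s.
Proof.
move=> n s; exists n.+1.
exists (tsubst (fun i => TX 1 (lift ord_max i))
          (fun _ => TJoin (TY n.+1 ord0) (TX 1 ord_max)) s).
move=> a; exists (ext a c) => u; rewrite eval_subst.
apply: eval_ext => [i|j] /=; first by rewrite /ext liftK.
by rewrite /ext unlift_none.
Qed.

Lemma ctx_meet (L : alg) (c : L) : forall n (s : term n 1), exists m (s' : term m 1),
        forall (a : 'I_n -> L), exists a' : 'I_m -> L, forall u,
        eval a' (fun _ => u) s' = eval a (fun _ => ameet u c) s.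
Proof.
move=> n s; exists n.+1.
exists (tsubst (fun i => TX 1 (lift ord_max i))
          (fun _ => TMeet (TY n.+1 ord0) (TX 1 ord_max)) s).
move=> a; exists (ext a c) => u; rewrite eval_subst.
apply: eval_ext => [i|j] /=; first by rewrite /ext liftK.
by rewrite /ext unlift_none.
Qed.

Lemma ctx_compl (L : alg) : forall n (s : term n 1), exists m (s' : term m 1),
        forall (a : 'I_n -> L), exists a' : 'I_m -> L, forall u,
        eval a' (fun _ => u) s' = eval a (fun _ => acompl u) s.
Proof.
move=> n s; exists n.
exists (tsubst (fun i => TX 1 i) (fun _ => TCompl (TY n ord0)) s).
move=> a; exists a => u; rewrite eval_subst.
by apply: eval_ext.
Qed.

Definition tT n k (s u : term n k) : term n k :=
  TJoin (TMeet s u) (TCompl (TJoin s u)).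

Lemma eval_tT n k (A : alg) (a : 'I_n -> A) (b : 'I_k -> A) (s u : term n k) :
  eval a b (tT s u) = tf (eval a b s) (eval a b u).
Proof. by []. Qed.

Definition Pu n (s : term n 1) : term n 2 :=
  tsubst (fun i => TX 2 i) (fun _ => TY n ord0) s.
Definition P1 n (s : term n 1) : term n 2 :=
  tsubst (fun i => TX 2 i) (fun _ => TOne n 2) s.

Lemma eval_Pu n (A : alg) (a : 'I_n -> A) (b : 'I_2 -> A) (s : term n 1) :
  eval a b (Pu s) = eval a (fun _ => b ord0) s.
Proof. by rewrite /Pu eval_subst; apply: eval_ext. Qed.

Lemma eval_P1 n (A : alg) (a : 'I_n -> A) (b : 'I_2 -> A) (s : term n 1) :
  eval a b (P1 s) = eval a (fun _ => aone A) s.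
Proof. by rewrite /P1 eval_subst; apply: eval_ext. Qed.

Lemma one_class (L : alg) (HL : in_V L) (I : L -> Prop) (HI : ideal I) (x : L) :
  I x -> Phi I x (aone L).
Proof.
move=> Ix n s a.
set fx := eval a (fun _ => x) s.
set f1 := eval a (fun _ => aone L) s.
have Hid1 : ideal_term (tT (Pu s) (tT (P1 s) (TY n ord_max))).
  move=> B HB a'; rewrite !eval_tT eval_Pu eval_P1 /=.
  by rewrite tf_x1 // tf_xx.
have Hid2 : ideal_term (tT (P1 s) (tT (Pu s) (TY n ord_max))).
  move=> B HB a'; rewrite !eval_tT eval_Pu eval_P1 /=.
  by rewrite tf_x1 // tf_xx.
split=> H.
- pose b : 'I_2 -> L := fun j => if j == ord0 then x else fx.
  have Hb : forall j, I (b j) by move=> j; rewrite /b; case: ifP.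
  have := HI _ _ _ Hid2 a b Hb.
  by rewrite !eval_tT eval_Pu eval_P1 /= /b /= -/fx -/f1 tf_xx // tf_x1.
- pose b : 'I_2 -> L := fun j => if j == ord0 then x else f1.
  have Hb : forall j, I (b j) by move=> j; rewrite /b; case: ifP.
  have := HI _ _ _ Hid1 a b Hb.
  by rewrite !eval_tT eval_Pu eval_P1 /= /b /= -/fx -/f1 tf_xx // tf_x1.
Qed.

Lemma one_in (L : alg) (I : L -> Prop) (HI : ideal I) : I (aone L).
Proof.
have Hid : ideal_term (TOne 0 0) by [].
have := HI _ _ _ Hid (fun _ => aone L) (fun _ => aone L).
by apply; case.
Qed.

Lemma Phi_refl (L : alg) (I : L -> Prop) x : Phi I x x.
Proof. by []. Qed.
Lemma Phi_sym (L : alg) (I : L -> Prop) x y : Phi I x y -> Phi I y x.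
Proof. by move=> H n s a; apply: iff_sym. Qed.
Lemma Phi_trans (L : alg) (I : L -> Prop) x y z : Phi I x y -> Phi I y z -> Phi I x z.
Proof. by move=> H1 H2 n s a; apply: iff_trans (H1 n s a) (H2 n s a). Qed.

Lemma Phi_join (L : alg) (I : L -> Prop) c x y : Phi I x y -> Phi I (ajoin x c) (ajoin y c).
Proof. exact: (Phi_ctx (g := fun u => ajoin u c) (@ctx_join L c)). Qed.
Lemma Phi_meet (L : alg) (I : L -> Prop) c x y : Phi I x y -> Phi I (ameet x c) (ameet y c).
Proof. exact: (Phi_ctx (g := fun u => ameet u c) (@ctx_meet L c)). Qed.
Lemma Phi_compl (L : alg) (I : L -> Prop) x y : Phi I x y -> Phi I (acompl x) (acompl y).
Proof. exact: (Phi_ctx (g := fun u => acompl u) (@ctx_compl L)). Qed.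

Lemma Theta_Phi (L : alg) (HL : in_V L) (I : L -> Prop) (HI : ideal I) x y :
  Theta I x y <-> Phi I x y.
Proof.
have HL' := HL.
have [mm [jj [j1 c1]]] := Vfacts HL.
case: HL' => jA [mA [jC [mC [jabs [mabs [j0 [m1 [jc [mc [iA iB]]]]]]]]]].
split.
- move=> Ht.
  have H1 : Phi I (tf x y) (aone L) by apply: one_class.
  have H2 := Phi_meet (ajoin x y) H1.
  have Es : ameet (tf x y) (ajoin x y) = ameet x y.
    have Ejs : ameet (ajoin x y) (ameet x y) = ameet x y.
      by rewrite mC -mA (jC x y) mabs.
    have := iB (ajoin x y) (ameet x y); rewrite Ejs => H.
    by rewrite mC /tf -H.
  have Ej : ameet (aone L) (ajoin x y) = ajoin x y by rewrite mC m1.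
  rewrite Es Ej in H2.
  have Hx := Phi_meet x H2.
  have Hy := Phi_meet y H2.
  have E1 : ameet (ameet x y) x = ameet x y by rewrite mC mA mm.
  have E2 : ameet (ajoin x y) x = x by rewrite mC mabs.
  have E3 : ameet (ameet x y) y = ameet x y by rewrite -mA mm.
  have E4 : ameet (ajoin x y) y = y by rewrite mC jC mabs.
  rewrite E1 E2 in Hx; rewrite E3 E4 in Hy.
  exact: Phi_trans (Phi_sym Hx) Hy.
- move=> H.
  have := H 1 (tT (TX 1 ord0) (TY 1 ord0)) (fun _ => x).
  rewrite !eval_tT /= tf_xx // => [[H1 _]].
  exact: H1 (one_in HI).
Qed.

Theorem mainTheorem9 (L : alg) (HL : in_V L) (I : L -> Prop) (HI : ideal I) :
  congruence (Theta I) /\ (forall x : L, Theta I x (@aone L) <-> I x).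
Proof.
have E := Theta_Phi HL HI.
have HL' := HL.
case: HL' => jA [mA [jC [mC [jabs [mabs [j0 [m1 [jc [mc [iA iB]]]]]]]]]].
split; last first.
  move=> x; rewrite /Theta.
  by have := tf_x1 HL x; rewrite /tf => ->.
split; first by move=> x; apply/E.
split; first by move=> x y /E H; apply/E; apply: Phi_sym.
split; first by move=> x y z /E H1 /E H2; apply/E; apply: Phi_trans H1 H2.
split.
  move=> x y x' y' /E H1 /E H2; apply/E.
  apply: Phi_trans (Phi_join y H1) _.
  rewrite (jC x' y) (jC x' y'); exact: Phi_join.
split.
  move=> x y x' y' /E H1 /E H2; apply/E.
  apply: Phi_trans (Phi_meet y H1) _.
  rewrite (mC x' y) (mC x' y'); exact: Phi_meet.
by move=> x x' /E H; apply/E; apply: Phi_compl.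
Qed.
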